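(* Let $0<\mu\le L$, $G>0$, $\rho>0$, $n\ge1$, $T\ge1$, and let $\eta>0$ satisfy $\eta\le\frac{2}{\mu+L}-\frac{\mu+L}{2\mu L(\mu/(\rho L^2)+1)}$. Then $$\frac{2G^2(\mu+L)}{n\mu L(1+\mu\rho)}\left\{1-\left[1-(1+\mu\rho)\frac{\eta\mu L}{\mu+L}\right]^T\right\}\le\frac{2G^2(\mu+L)}{n\mu L}\left\{1-\left[1-\frac{\eta\mu L}{\mu+L}\right]^T\right\};$$ that is, for per-example losses that are $\mu$-strongly convex, $L$-smooth and $G$-Lipschitz, run with such a constant learning rate for $T$ steps, the uniform-stability generalization bound of SAM (left) is at most that of SGD (right).
   Context: The left side is the generalization-error bound for SAM (update $\boldsymbol{w}_{t+1}=\boldsymbol{w}_t-\eta\nabla f(\boldsymbol{w}_t+\rho\nabla f(\boldsymbol{w}_t,z),z)$ with a uniformly sampled example $z$ from an $n$-example training set), and the right side is the corresponding bound for SGD with the same learning rate. *)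

(* Defs.v *)
From mathcomp Require Import all_boot all_order all_algebra.
Set Implicit Arguments. Unset Strict Implicit. Unset Printing Implicit Defensive.
Import Order.TTheory GRing.Theory Num.Theory.
Local Open Scope ring_scope.

Definition sam_bound (R : realFieldType) (G mu L rho eta : R) (n T : nat) : R :=
  (2 * G ^+ 2 * (mu + L)) / (n%:R * mu * L * (1 + mu * rho)) *
  (1 - (1 - (1 + mu * rho) * (eta * mu * L / (mu + L))) ^+ T).

Definition sgd_bound (R : realFieldType) (G mu L eta : R) (n T : nat) : R :=
  (2 * G ^+ 2 * (mu + L)) / (n%:R * mu * L) *
  (1 - (1 - eta * mu * L / (mu + L)) ^+ T).

(* Main.v *)
Require Import Defs.
From mathcomp Require Import all_boot all_order all_algebra.
From mathcomp Require Import ring lra.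
Import Order.TTheory GRing.Theory Num.Theory.
Local Open Scope ring_scope.

Lemma geom_id (R : realFieldType) (y : R) (T : nat) :
  1 - y ^+ T = (1 - y) * \sum_(i < T) y ^+ i.
Proof.
rewrite -{1}(expr1n R T) subrXX; congr (_ * _).
by apply: eq_bigr => i _; rewrite expr1n mul1r.
Qed.

Theorem corollary6 (R : realFieldType) (mu L G rho eta : R) (n T : nat) :
  0 < mu -> mu <= L -> 0 < G -> 0 < rho -> (1 <= n)%N -> (1 <= T)%N ->
  0 < eta ->
  eta <= 2 / (mu + L) - (mu + L) / (2 * mu * L * (mu / (rho * L ^+ 2) + 1)) ->
  sam_bound G mu L rho eta n T <= sgd_bound G mu L eta n T.
Proof.
move=> hmu hL hG hrho hn hT heta hE.
have hL0 : 0 < L by apply: lt_le_trans hL.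
have hs : 0 < mu + L by lra.
have hq : 0 < mu + rho * L ^+ 2.
  by rewrite addr_gt0 // mulr_gt0 // exprn_gt0.
have Eeq : 2 / (mu + L) - (mu + L) / (2 * mu * L * (mu / (rho * L ^+ 2) + 1))
  = (4 * mu * L * (mu + rho * L ^+ 2) - rho * L ^+ 2 * (mu + L) ^+ 2)
     / (2 * (mu + L) * mu * L * (mu + rho * L ^+ 2)).
  field.
  by rewrite !lt0r_neq0.
rewrite Eeq in hE.
set a := eta * mu * L / (mu + L).
set c := 1 + mu * rho.
have ha : 0 < a by rewrite /a divr_gt0 // !mulr_gt0.
have hc : 1 < c by rewrite /c ltrDl mulr_gt0.
have key : (c + 1) * a <= 1.
  have ha' : a <= (4 * mu * L * (mu + rho * L ^+ 2) - rho * L ^+ 2 * (mu + L) ^+ 2)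
     / (2 * (mu + L) ^+ 2 * (mu + rho * L ^+ 2)).
    have -> : a = eta * (mu * L / (mu + L)) by rewrite /a !mulrA.
    apply: (le_trans (ler_wpM2r _ hE)); first by rewrite divr_ge0 // ltW // mulr_gt0.
    rewrite le_eqVlt; apply/orP; left; apply/eqP; field.
    by rewrite !lt0r_neq0.
  have hc1 : 0 < c + 1 by lra.
  apply: (le_trans (ler_wpM2l (ltW hc1) ha')).
  rewrite mulrA ler_pdivrMr; last by rewrite !mulr_gt0 // exprn_gt0.
  rewrite mul1r /c.
  set q := mu + rho * L ^+ 2.
  have h4 : 4 * mu * L <= (mu + L) ^+ 2.
    have : 0 <= (L - mu) ^+ 2 by rewrite sqr_ge0.
    lra.
  have hmr : 0 <= mu * rho by rewrite ltW // mulr_gt0.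
  have hrL : mu * (mu * rho) <= 2 * (rho * L ^+ 2).
    have : mu * mu <= L * L by apply: ler_pM; lra.
    rewrite expr2; nra.
  have hs2 : 0 < (mu + L) ^+ 2 by rewrite exprn_gt0.
  have hN : 4 * mu * L * q - rho * L ^+ 2 * (mu + L) ^+ 2 <= (mu + L) ^+ 2 * mu.
    rewrite /q; nra.
  have h2 : 0 < 1 + mu * rho + 1 by lra.
  apply: (le_trans (ler_wpM2l (ltW h2) hN)).
  rewrite /q; nra.
have hx0 : 0 <= 1 - c * a by nra.
have hxy : 1 - c * a <= 1 - a by nra.
rewrite /sam_bound /sgd_bound -/a -/c.
rewrite (@geom_id _ (1 - c * a)) (@geom_id _ (1 - a)). 
have -> : 1 - (1 - c * a) = c * a by ring.
have -> : 1 - (1 - a) = a by ring.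
set S1 := \sum_(i < T) _.
set S2 := \sum_(i < T) _.
have hS : S1 <= S2.
  apply: ler_sum => i _; apply: lerXn2r => //; rewrite qualifE /=; lra.
set K := 2 * G ^+ 2 * (mu + L).
have hK : 0 < K by rewrite /K !mulr_gt0 // exprn_gt0.
have hn0 : 0 < (n%:R : R) by rewrite ltr0n.
have -> : K / (n%:R * mu * L * c) * (c * a * S1) = K / (n%:R * mu * L) * (a * S1).
  field; rewrite !lt0r_neq0 //; lra.
rewrite ler_pM2l; last by rewrite divr_gt0 // !mulr_gt0.
by rewrite ler_pM2l.
Qed.
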